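(* For every choice of environment function $Env()$, ESAdapt under the reward function $Rew_{CodeB}()$ is unsolvable: there is no algorithm (Turing machine), regardless of running time or memory, that produces the correct output for every instance.
   Context: Model. Let $X=\{x_1,\dots,x_{|X|}\}$ be Boolean variables and $O$ a finite output set. Software system requirements are a finite set $R$ of pairs $(i,o)$, where $i$ is a truth assignment to $X$ and $o\in O$. Interfaces and components follow the Dana runtime component model: an interface is a set of function prototypes (function name, return type, parameter types) together with a set of typed transfer fields; a component provides one or more interfaces and requires zero or more interfaces, and contains code (in a Dana-like imperative language with assignments, conditionals, loops, arrays, function calls and an output statement; this language can simulate any Turing machine) implementing every function of its provided interfaces; this code may call functions and use transfer fields of its required interfaces. $L_{int}$ and $L_{comp}$ are finite libraries of interfaces and components. Given a base component $c\in L_{comp}$ implementing a function main, a valid component-based software system $S$ based on $c$ is obtained by choosing, for each required interface of $c$, a component of $L_{comp}$ providing it, and recursively for each required interface of every chosen component; separate copies of a component are used for separate required-interface occurrences, and when a component providing several interfaces implements one of them, only a reduced copy containing that interface's code is used. Its component wiring tree has root $c$, vertices the chosen component copies, arcs labelled by the implemented interfaces; no component label may occur twice on a root-to-leaf path. $S$ is working relative to $R$ if for every $(i,o)\in R$, running $S$ on input $i$ outputs $o$. An environment function $Env()$ maps a system to events/metric values and is computable in polynomial time. $Rew_{CodeB}(S)$ is the total number of lines of code in the interfaces and components comprising $S$. Problem ESAdapt under $Rew_{CodeB}()$: Input: $R$, $L_{int}$, $L_{comp}$, a working system $S$ based on a component $c\in L_{comp}$ relative to $R$, $L_{int}$, $L_{comp}$,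 and $Env()$. Output: a working system $S'$ based on $c$ relative to $L_{int},L_{comp},R$ having the smallest value of $Rew_{CodeB}(S')$ over all working systems based on $c$ relative to $L_{int},L_{comp},R$. *)

(* Defs.v *)
From HB Require Import structures.
From mathcomp Require Import all_boot.

Set Implicit Arguments.
Unset Strict Implicit.
Unset Printing Implicit Defensive.

(*  1. The Dana-like component programming language                          *)

(* Values are natural numbers; variables, function names, interface        *)
(* identifiers, transfer-field names and type codes are natural numbers.    *)

Inductive binop := BAdd | BSub | BMul | BDiv | BMod | BEq | BLt.

Inductive expr :=
| ENum of nat
| EVar of nat
| EIn of nat                       (* value (0/1) of input variable x_(k+1) *)
| ETF of option nat & nat          (* transfer field f of the provided
                                      interface (None) or of the k-th
                                      required interface (Some k)           *)
| EBin of binop & expr & expr.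

Inductive stmt :=
| SSkip
| SAssign of nat & expr
| SSeq of stmt & stmt
| SIf of expr & stmt & stmt                  (* if e <> 0 then s1 else s2   *)
| SWhile of expr & stmt                      (* while e <> 0 do s           *)
| SCall of nat & nat & nat & seq nat         (* x := req_k.f(y1,...,ym)     *)
| SReturn of expr
| SSetTF of option nat & nat & expr
| SOutput of expr.                           (* output e (ends the run)     *)

(* An interface: function prototypes (name, return type, parameter types)  *)
(* and typed transfer fields (type, name).                                  *)
Record iface := Iface {
  i_protos : seq (nat * nat * seq nat);
  i_fields : seq (nat * nat) }.

Record fdef := FDef {
  d_iface : nat;
  d_name : nat;
  d_params : seq nat;
  d_body : stmt }.

(* A component: provided interfaces, required interfaces (indices into the *)
(* interface library), and code.                                            *)
Record comp := Comp {
  c_provides : seq nat;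
  c_requires : seq nat;
  c_code : seq fdef }.

(* Component wiring trees: a vertex is labelled by (the index in L_comp of) *)
(* a component; its children correspond, in order, to its required          *)
(* interfaces.                                                              *)
Inductive wtree := WNode of nat & seq wtree.

Definition binop_code b :=
  match b with BAdd => 0 | BSub => 1 | BMul => 2 | BDiv => 3 | BMod => 4
             | BEq => 5 | BLt => 6 end.
Definition binop_decode n :=
  match n with 0 => Some BAdd | 1 => Some BSub | 2 => Some BMul
             | 3 => Some BDiv | 4 => Some BMod | 5 => Some BEq | 6 => Some BLt
             | _ => None end.
Lemma binop_codeK : pcancel binop_code binop_decode. Proof. by case. Qed.
HB.instance Definition _ := Countable.copy binop (pcan_type binop_codeK).

Fixpoint expr_enc (e : expr) : GenTree.tree (seq nat) :=
  match e with
  | ENum n => GenTree.Node 0 [:: GenTree.Leaf [:: n]]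
  | EVar v => GenTree.Node 1 [:: GenTree.Leaf [:: v]]
  | EIn k => GenTree.Node 2 [:: GenTree.Leaf [:: k]]
  | ETF None f => GenTree.Node 3 [:: GenTree.Leaf [:: f]]
  | ETF (Some k) f => GenTree.Node 4 [:: GenTree.Leaf [:: k; f]]
  | EBin b e1 e2 =>
      GenTree.Node 5 [:: GenTree.Leaf [:: binop_code b]; expr_enc e1; expr_enc e2]
  end.

Fixpoint expr_dec (t : GenTree.tree (seq nat)) : option expr :=
  match t with
  | GenTree.Node 0 [:: GenTree.Leaf [:: n]] => Some (ENum n)
  | GenTree.Node 1 [:: GenTree.Leaf [:: v]] => Some (EVar v)
  | GenTree.Node 2 [:: GenTree.Leaf [:: k]] => Some (EIn k)
  | GenTree.Node 3 [:: GenTree.Leaf [:: f]] => Some (ETF None f)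
  | GenTree.Node 4 [:: GenTree.Leaf [:: k; f]] => Some (ETF (Some k) f)
  | GenTree.Node 5 [:: GenTree.Leaf [:: c]; t1; t2] =>
      match binop_decode c, expr_dec t1, expr_dec t2 with
      | Some b, Some e1, Some e2 => Some (EBin b e1 e2)
      | _, _, _ => None
      end
  | _ => None
  end.

Lemma expr_encK : pcancel expr_enc expr_dec.
Proof.
by elim=> //= [[k|] f|b e1 IH1 e2 IH2] //; rewrite binop_codeK IH1 IH2.
Qed.
HB.instance Definition _ := Countable.copy expr (pcan_type expr_encK).

Fixpoint stmt_enc (s : stmt) : GenTree.tree (seq nat) :=
  match s with
  | SSkip => GenTree.Node 0 [::]
  | SAssign x e => GenTree.Node 1 [:: GenTree.Leaf [:: x]; expr_enc e]
  | SSeq s1 s2 => GenTree.Node 2 [:: stmt_enc s1; stmt_enc s2]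
  | SIf e s1 s2 => GenTree.Node 3 [:: expr_enc e; stmt_enc s1; stmt_enc s2]
  | SWhile e s1 => GenTree.Node 4 [:: expr_enc e; stmt_enc s1]
  | SCall x k f args =>
      GenTree.Node 5 [:: GenTree.Leaf [:: x; k; f]; GenTree.Leaf args]
  | SReturn e => GenTree.Node 6 [:: expr_enc e]
  | SSetTF None f e => GenTree.Node 7 [:: GenTree.Leaf [:: f]; expr_enc e]
  | SSetTF (Some k) f e =>
      GenTree.Node 8 [:: GenTree.Leaf [:: k; f]; expr_enc e]
  | SOutput e => GenTree.Node 9 [:: expr_enc e]
  end.

Fixpoint stmt_dec (t : GenTree.tree (seq nat)) : option stmt :=
  match t with
  | GenTree.Node 0 [::] => Some SSkip
  | GenTree.Node 1 [:: GenTree.Leaf [:: x]; te] =>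
      omap (SAssign x) (expr_dec te)
  | GenTree.Node 2 [:: t1; t2] =>
      match stmt_dec t1, stmt_dec t2 with
      | Some s1, Some s2 => Some (SSeq s1 s2) | _, _ => None end
  | GenTree.Node 3 [:: te; t1; t2] =>
      match expr_dec te, stmt_dec t1, stmt_dec t2 with
      | Some e, Some s1, Some s2 => Some (SIf e s1 s2) | _, _, _ => None end
  | GenTree.Node 4 [:: te; t1] =>
      match expr_dec te, stmt_dec t1 with
      | Some e, Some s1 => Some (SWhile e s1) | _, _ => None end
  | GenTree.Node 5 [:: GenTree.Leaf [:: x; k; f]; GenTree.Leaf args] =>
      Some (SCall x k f args)
  | GenTree.Node 6 [:: te] => omap SReturn (expr_dec te)
  | GenTree.Node 7 [:: GenTree.Leaf [:: f]; te] =>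
      omap (SSetTF None f) (expr_dec te)
  | GenTree.Node 8 [:: GenTree.Leaf [:: k; f]; te] =>
      omap (SSetTF (Some k) f) (expr_dec te)
  | GenTree.Node 9 [:: te] => omap SOutput (expr_dec te)
  | _ => None
  end.

Lemma stmt_encK : pcancel stmt_enc stmt_dec.
Proof.
elim=> [|x e|s1 IH1 s2 IH2|e s1 IH1 s2 IH2|e s1 IH1|x k f a|e|[k|] f e|e] //=;
  by rewrite ?expr_encK ?IH1 ?IH2.
Qed.
HB.instance Definition _ := Countable.copy stmt (pcan_type stmt_encK).

Definition iface_enc (I : iface) := (i_protos I, i_fields I).
Definition iface_dec p := Iface p.1 p.2.
Lemma iface_encK : cancel iface_enc iface_dec. Proof. by case. Qed.
HB.instance Definition _ := Countable.copy iface (can_type iface_encK).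

Definition fdef_enc (d : fdef) := (d_iface d, d_name d, d_params d, d_body d).
Definition fdef_dec (p : nat * nat * seq nat * stmt) :=
  FDef p.1.1.1 p.1.1.2 p.1.2 p.2.
Lemma fdef_encK : cancel fdef_enc fdef_dec. Proof. by case. Qed.
HB.instance Definition _ := Countable.copy fdef (can_type fdef_encK).

Definition comp_enc (c : comp) := (c_provides c, c_requires c, c_code c).
Definition comp_dec (p : seq nat * seq nat * seq fdef) := Comp p.1.1 p.1.2 p.2.
Lemma comp_encK : cancel comp_enc comp_dec. Proof. by case. Qed.
HB.instance Definition _ := Countable.copy comp (can_type comp_encK).

Fixpoint wtree_enc (t : wtree) : GenTree.tree nat :=
  match t with WNode a ch => GenTree.Node a (map wtree_enc ch) end.
Fixpoint wtree_dec (t : GenTree.tree nat) : wtree :=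
  match t with
  | GenTree.Node a ch => WNode a (map wtree_dec ch)
  | GenTree.Leaf _ => WNode 0 [::]
  end.
Fixpoint wtree_encK (t : wtree) : wtree_dec (wtree_enc t) = t :=
  match t return wtree_dec (wtree_enc t) = t with
  | WNode a ch =>
      f_equal (WNode a)
        ((fix F (l : seq wtree) : map wtree_dec (map wtree_enc l) = l :=
            match l return map wtree_dec (map wtree_enc l) = l with
            | [::] => erefl
            | x :: l' => f_equal2 cons (wtree_encK x) (F l')
            end) ch)
  end.
HB.instance Definition _ := Countable.copy wtree (can_type wtree_encK).

(*  2. Semantics of component-based systems                                  *)

Definition dcomp : comp := Comp [::] [::] [::].
Definition diface : iface := Iface [::] [::].

Definition main_name : nat := 0.

Definition binop_eval (b : binop) (x y : nat) : nat :=
  match b with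
  | BAdd => x + y | BSub => x - y | BMul => x * y
  | BDiv => x %/ y | BMod => x %% y
  | BEq => nat_of_bool (x == y) | BLt => nat_of_bool (x < y)
  end.

(* Local variables, and transfer-field values stored per arc of the wiring *)
(* tree (an arc is identified by the path from the root to its head).      *)
Record state := State {
  st_locals : nat -> nat;
  st_tfs : seq nat -> nat -> nat }.

Definition upd (f : nat -> nat) (x v : nat) : nat -> nat :=
  fun y => if y == x then v else f y.

Definition upd_tf (g : seq nat -> nat -> nat) (a : seq nat) (f v : nat) :=
  fun a' f' => if (a' == a) && (f' == f) then v else g a' f'.

Definition arc_of (p : seq nat) (slot : option nat) : seq nat :=
  match slot with None => p | Some k => rcons p k end.

Fixpoint eval (inp : seq bool) (p : seq nat) (st : state) (e : expr) : nat :=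
  match e with
  | ENum n => n
  | EVar v => st_locals st v
  | EIn k => nat_of_bool (nth false inp k)
  | ETF s f => st_tfs st (arc_of p s) f
  | EBin b e1 e2 => binop_eval b (eval inp p st e1) (eval inp p st e2)
  end.

Fixpoint subtree (t : wtree) (p : seq nat) : option wtree :=
  match p with
  | [::] => Some t
  | k :: p' =>
      let: WNode _ ch := t in
      if k < size ch then subtree (nth (WNode 0 [::]) ch k) p' else None
  end.

Definition label (t : wtree) : nat := let: WNode a _ := t in a.

(* The definition executed when the vertex at path p calls function f of   *)
(* its k-th required interface: the code, for that interface, of the child *)
(* component copy (the reduced copy for that interface).                   *)
Definition lookup_callee (Lc : seq comp) (S : wtree) (p : seq nat) (k f : nat)
    : option fdef :=
  match subtree S p, subtree S (rcons p k) with
  | Some t, Some t' =>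
      let ca := nth dcomp Lc (label t) in
      if k < size (c_requires ca) then
        let j := nth 0 (c_requires ca) k in
        let cb := nth dcomp Lc (label t') in
        ohead [seq d <- c_code cb | (d_iface d == j) && (d_name d == f)]
      else None
  | _, _ => None
  end.

Definition bind_params (params vals : seq nat) : nat -> nat :=
  fun v => if v \in params then nth 0 vals (index v params) else 0.

Inductive outcome :=
| ONormal of state
| OReturn of nat & (seq nat -> nat -> nat)
| OHalt of nat                 (* an output statement was executed *)
| OFuel
| OErr.

(* Fuel-indexed big-step interpreter; the vertex executing is at path p.   *)
Fixpoint exec (Lc : seq comp) (S : wtree) (inp : seq bool) (fuel : nat)
    (p : seq nat) (st : state) (s : stmt) {struct fuel} : outcome :=
  match fuel with
  | 0 => OFuel
  | fuel'.+1 =>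
    match s with
    | SSkip => ONormal st
    | SAssign x e =>
        ONormal (State (upd (st_locals st) x (eval inp p st e)) (st_tfs st))
    | SSeq s1 s2 =>
        match exec Lc S inp fuel' p st s1 with
        | ONormal st' => exec Lc S inp fuel' p st' s2
        | o => o
        end
    | SIf e s1 s2 =>
        if eval inp p st e != 0 then exec Lc S inp fuel' p st s1
        else exec Lc S inp fuel' p st s2
    | SWhile e b =>
        if eval inp p st e != 0 then
          match exec Lc S inp fuel' p st b with
          | ONormal st' => exec Lc S inp fuel' p st' (SWhile e b)
          | o => o
          end
        else ONormal st
    | SCall x k f args =>
        match lookup_callee Lc S p k f with
        | None => OErr
        | Some d =>
          if size args != size (d_params d) then OErr else
          let st0 := State (bind_params (d_params d) (map (st_locals st) args))
                           (st_tfs st) in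
          match exec Lc S inp fuel' (rcons p k) st0 (d_body d) with
          | ONormal st' => ONormal (State (upd (st_locals st) x 0) (st_tfs st'))
          | OReturn r tf' => ONormal (State (upd (st_locals st) x r) tf')
          | o => o
          end
        end
    | SReturn e => OReturn (eval inp p st e) (st_tfs st)
    | SSetTF sl f e =>
        ONormal (State (st_locals st)
                       (upd_tf (st_tfs st) (arc_of p sl) f (eval inp p st e)))
    | SOutput e => OHalt (eval inp p st e)
    end
  end.

Definition sys_outputs (Lc : seq comp) (S : wtree) (inp : seq bool) (o : nat)
    : Prop :=
  match [seq d <- c_code (nth dcomp Lc (label S)) | d_name d == main_name] with
  | d :: _ =>
      exists fuel, exec Lc S inp fuel [::] (State (fun _ => 0) (fun _ _ => 0))
                        (d_body d) = OHalt o
  | [::] => False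
  end.

Definition working (Lc : seq comp) (R : seq (seq bool * nat)) (S : wtree) : Prop :=
  forall io, io \in R -> sys_outputs Lc S io.1 io.2.

(*  3. Libraries, valid systems, reward                                      *)

Definition comp_wf (Li : seq iface) (cm : comp) : bool :=
  all (fun j => j < size Li) (c_provides cm) &&
  all (fun j => j < size Li) (c_requires cm) &&
  all (fun d => d_iface d \in c_provides cm) (c_code cm) &&
  all (fun j =>
         all (fun pr => has (fun d => (d_iface d == j) && (d_name d == pr.1.1)
                                      && (size (d_params d) == size pr.2))
                            (c_code cm))
             (i_protos (nth diface Li j)))
      (c_provides cm).

Definition lib_wf (Li : seq iface) (Lc : seq comp) : bool := all (comp_wf Li) Lc.

Definition implements_main (cm : comp) : bool :=
  has (fun d => d_name d == main_name) (c_code cm).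

(* Valid wiring (sub)tree: anc = labels on the path from the root. *)
Fixpoint valid_tree (Lc : seq comp) (anc : seq nat) (t : wtree) {struct t} : bool :=
  match t with
  | WNode a ch =>
      (a < size Lc) && (a \notin anc) &&
      (fix valid_children (l : seq wtree) (rs : seq nat) {struct l} : bool :=
         match l, rs with
         | [::], [::] => true
         | t1 :: l', r :: rs' =>
             (r \in c_provides (nth dcomp Lc (label t1))) &&
             valid_tree Lc (a :: anc) t1 && valid_children l' rs'
         | _, _ => false
         end) ch (c_requires (nth dcomp Lc a))
  end.

Definition valid_system (Lc : seq comp) (c : nat) (S : wtree) : bool :=
  (label S == c) && valid_tree Lc [::] S.

Fixpoint stmt_loc (s : stmt) : nat :=
  match s with
  | SSeq s1 s2 => stmt_loc s1 + stmt_loc s2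
  | SIf _ s1 s2 => (stmt_loc s1 + stmt_loc s2).+1
  | SWhile _ s1 => (stmt_loc s1).+1
  | _ => 1
  end.

Definition fdef_loc (d : fdef) : nat := (stmt_loc (d_body d)).+1.

Definition iface_loc (I : iface) : nat := (size (i_protos I) + size (i_fields I)).+1.

Definition comp_loc (cm : comp) : nat :=
  (size (c_provides cm) + size (c_requires cm) + sumn (map fdef_loc (c_code cm))).+1.

(* reduced copy containing only the code of provided interface j *)
Definition comp_loc_red (cm : comp) (j : nat) : nat :=
  (1 + size (c_requires cm) +
   sumn (map fdef_loc [seq d <- c_code cm | d_iface d == j])).+1.

(* j = None for the root (full component c together with its provided      *)
(* interfaces), Some j for a copy implementing interface j.                 *)
Fixpoint tree_loc (Li : seq iface) (Lc : seq comp) (j : option nat) (t : wtree)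
    {struct t} : nat :=
  match t with
  | WNode a ch =>
      let cm := nth dcomp Lc a in
      match j with
      | None => comp_loc cm + sumn (map (fun j => iface_loc (nth diface Li j))
                                        (c_provides cm))
      | Some j => comp_loc_red cm j + iface_loc (nth diface Li j)
      end +
      (fix F (l : seq wtree) (rs : seq nat) {struct l} : nat :=
         match l, rs with
         | t1 :: l', r :: rs' => tree_loc Li Lc (Some r) t1 + F l' rs'
         | _, _ => 0
         end) ch (c_requires cm)
  end.

Definition Rew_CodeB (Li : seq iface) (Lc : seq comp) (S : wtree) : nat :=
  tree_loc Li Lc None S.

(*  4. The problem ESAdapt under Rew_CodeB                                   *)

(* An environment function maps systems to (event/metric) values. *)
Definition env := wtree -> nat.

(* Instances: number |X| of Boolean variables, requirements R, interface   *)
(* library, component library, base component c, current system S.        *)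
Definition instance :=
  (nat * seq (seq bool * nat) * seq iface * seq comp * nat * wtree)%type.

Definition valid_instance (n : nat) (R : seq (seq bool * nat)) (Li : seq iface)
    (Lc : seq comp) (c : nat) (S : wtree) : Prop :=
  [/\ lib_wf Li Lc, all (fun io => size io.1 == n) R,
      (c < size Lc) && implements_main (nth dcomp Lc c),
      valid_system Lc c S & working Lc R S].

Definition optimal_system (R : seq (seq bool * nat)) (Li : seq iface)
    (Lc : seq comp) (c : nat) (S' : wtree) : Prop :=
  [/\ valid_system Lc c S', working Lc R S' &
      forall S'', valid_system Lc c S'' -> working Lc R S'' ->
                  Rew_CodeB Li Lc S' <= Rew_CodeB Li Lc S''].

(*  5. Algorithms: register (counter) machines, a Turing-complete model      *)

Inductive rm_instr :=
| RInc of nat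
| RDecJz of nat & nat.

(* configuration: program counter and registers; halted when pc >= size P *)
Definition rm_step (P : seq rm_instr) (cf : nat * (nat -> nat)) :
    nat * (nat -> nat) :=
  let: (pc, regs) := cf in
  match nth (RInc 0) P pc with
  | RInc r => (pc.+1, upd regs r (regs r).+1)
  | RDecJz r l => if regs r == 0 then (l, regs)
                  else (pc.+1, upd regs r (regs r).-1)
  end.

Fixpoint rm_run (P : seq rm_instr) (fuel : nat) (cf : nat * (nat -> nat)) :
    option (nat -> nat) :=
  if size P <= cf.1 then Some cf.2 else
  match fuel with
  | 0 => None
  | fuel'.+1 => rm_run P fuel' (rm_step P cf)
  end.

(* P, started with x in register 0 (all others 0), halts with y in reg. 0 *)
Definition rm_computes (P : seq rm_instr) (x y : nat) : Prop :=
  exists fuel regs, rm_run P fuel (0, upd (fun _ => 0) 0 x) = Some regs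
                    /\ regs 0 = y.

Definition solves_ESAdapt_CodeB (Env : env) (P : seq rm_instr) : Prop :=
  forall n R Li Lc c S,
    valid_instance n R Li Lc c S ->
    exists S', optimal_system R Li Lc c S' /\
               rm_computes P (pickle ((n, R, Li, Lc, c, S) : instance))
                             (pickle S').

(* Main.v *)
Require Import Defs.
From mathcomp Require Import all_boot zify.
From Stdlib Require Import FunctionalExtensionality.
Set Implicit Arguments. Unset Strict Implicit.

Section Exec.
Variables (Lc : seq Defs.comp) (S : wtree) (inp : seq bool).

Lemma exec_mono f f' p st s : f <= f' -> exec Lc S inp f p st s <> OFuel ->
  exec Lc S inp f' p st s = exec Lc S inp f p st s.
Proof.
elim: f f' p st s => [|f IH] [|f'] p st s //= Hle.
have Hle' : f <= f' by [].
case: s => //=.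
- move=> s1 s2.
  case E: (exec Lc S inp f p st s1) => [st'|r tf|o||] H;
    rewrite (IH f') ?E //; by rewrite (IH f').
- by move=> e s1 s2; case: ifP => _ H; rewrite (IH f').
- move=> e b; case: ifP => // _.
  case E: (exec Lc S inp f p st b) => [st'|r tf|o||] H;
    rewrite (IH f') ?E //; by rewrite (IH f').
- move=> x k g args; case: (lookup_callee _ _ _ _ _) => // d.
  case: ifP => // _.
  set st0 := State _ _.
  case E: (exec Lc S inp f (rcons p k) st0 (d_body d)) => [st'|r tf|o||] H;
    by rewrite (IH f') ?E.
Qed.

Lemma exec_det f1 f2 p st s r1 r2 :
  exec Lc S inp f1 p st s = r1 -> exec Lc S inp f2 p st s = r2 ->
  r1 <> OFuel -> r2 <> OFuel -> r1 = r2.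
Proof.
move=> E1 E2 H1 H2.
rewrite -E1 -E2 -(@exec_mono f1 (maxn f1 f2)) ?leq_maxl ?E1 //.
by rewrite -(@exec_mono f2 (maxn f1 f2)) ?leq_maxr ?E2.
Qed.

End Exec.

Lemma runs_seq Lc S inp f1 f2 p st s1 s2 st1 r :
  exec Lc S inp f1 p st s1 = ONormal st1 -> exec Lc S inp f2 p st1 s2 = r -> r <> OFuel ->
  exec Lc S inp (maxn f1 f2).+1 p st (SSeq s1 s2) = r.
Proof.
move=> E1 E2 H /=.
rewrite (@exec_mono _ _ _ f1) ?leq_maxl ?E1 //.
by rewrite (@exec_mono _ _ _ f2) ?leq_maxr ?E2 //; move: H; rewrite -E2.
Qed.

Lemma runs_while Lc S inp f1 f2 p st e b st1 r :
  eval inp p st e != 0 ->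
  exec Lc S inp f1 p st b = ONormal st1 -> exec Lc S inp f2 p st1 (SWhile e b) = r -> r <> OFuel ->
  exec Lc S inp (maxn f1 f2).+1 p st (SWhile e b) = r.
Proof.
move=> He E1 E2 H /=; rewrite He.
rewrite (@exec_mono _ _ _ f1) ?leq_maxl ?E1 //.
by rewrite (@exec_mono _ _ _ f2) ?leq_maxr ?E2 //; move: H; rewrite -E2.
Qed.

Definition det (s : stmt) (g : (nat -> nat) -> (nat -> nat)) :=
  forall Lc S inp p st, exists f,
    exec Lc S inp f p st s = ONormal (State (g (st_locals st)) (st_tfs st)).

Lemma det_seq s1 s2 g1 g2 : det s1 g1 -> det s2 g2 -> det (SSeq s1 s2) (fun L => g2 (g1 L)).
Proof.
move=> H1 H2 Lc S inp p st.
have [f1 E1] := H1 Lc S inp p st.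
have [f2 E2] := H2 Lc S inp p (State (g1 (st_locals st)) (st_tfs st)).
by exists (maxn f1 f2).+1; rewrite (runs_seq E1 E2).
Qed.

Lemma det_asg x e g : (forall inp p st, eval inp p st e = g (st_locals st)) ->
  det (SAssign x e) (fun L => upd L x (g L)).
Proof. by move=> H Lc S inp p st; exists 1; rewrite /= H. Qed.

Lemma det_ext s g1 g2 : det s g1 -> (forall L, g1 L =1 g2 L) -> det s g2.
Proof.
move=> H E Lc S inp p st; have [f Ef] := H Lc S inp p st; exists f; rewrite Ef.
by do 2 f_equal; apply: functional_extensionality; apply: E.
Qed.

Definition IV := 4.

Definition WLOOP x :=
  SWhile (EVar IV) (SSeq (SAssign x (EBin BMul (EVar x) (ENum 2)))
                         (SAssign IV (EBin BSub (EVar IV) (ENum 1)))).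

Lemma wloop_ok x Lc S inp p : x != IV -> forall k L tf, L IV = k -> exists f,
  exec Lc S inp f p (State L tf) (WLOOP x) =
  ONormal (State (fun v => if v == x then L x * 2 ^ k else if v == IV then 0 else L v) tf).
Proof.
move=> hx; elim=> [|k IH] L tf Hk.
  exists 1; rewrite /= Hk /=; do 2 f_equal; apply: functional_extensionality => v.
  by rewrite expn0 muln1; case: eqP => [->|] //; case: eqP => [->|]. 
set L1 := upd (upd L x (L x * 2)) IV k.
have H1 : L1 IV = k by rewrite /L1 /upd eqxx.
have [f E] := IH L1 tf H1.
exists (maxn 2 f).+1.
apply: (@runs_while _ _ _ 2 f _ _ _ _ (State L1 tf)) => //=.
- by rewrite Hk.
- rewrite /L1 /upd /= Hk subn1 /=; do 2 f_equal; apply: functional_extensionality => v.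
  by rewrite [IV == x]eq_sym (negbTE hx).
rewrite -/(WLOOP x) E; do 2 f_equal; apply: functional_extensionality => v.
rewrite /L1 /upd eqxx expnS.
rewrite (negbTE hx) mulnA [_ * 2 * _]mulnC mulnA.
case: (v == x) => //; case: (v == IV) => //; by rewrite mulnC.
Qed.

Definition POW x y :=
  SSeq (SAssign IV (EVar y)) (SSeq (SAssign x (ENum 1)) (WLOOP x)).

Lemma det_POW x y : x != IV ->
  det (POW x y) (fun L v => if v == x then 2 ^ (L y) else if v == IV then 0 else L v).
Proof.
move=> hx Lc S inp p st.
set L1 := upd (upd (st_locals st) IV (st_locals st y)) x 1.
have HL1 : L1 IV = st_locals st y by rewrite /L1 /upd eq_sym (negbTE hx) eqxx.
have [f E] := @wloop_ok x Lc S inp p hx (st_locals st y) L1 (st_tfs st) HL1.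
exists (maxn 1 (maxn 1 f).+1).+1.
apply: (runs_seq (st1 := State (upd (st_locals st) IV (st_locals st y)) (st_tfs st))) => //.
apply: (runs_seq (st1 := State L1 (st_tfs st))) => //.
rewrite E; do 2 f_equal; apply: functional_extensionality => v.
rewrite /L1 /upd eqxx mul1n; case: eqP => // _; by case: eqP.
Qed.

Definition hoare (P Q : (nat -> nat) -> Prop) (s : stmt) :=
  forall Lc S inp p L tf, P L -> exists f L',
    exec Lc S inp f p (State L tf) s = ONormal (State L' tf) /\ Q L'.

Lemma hoare_seq P Q R s1 s2 : hoare P Q s1 -> hoare Q R s2 -> hoare P R (SSeq s1 s2).
Proof.
move=> H1 H2 Lc S inp p L tf HP.
have [f1 [L1 [E1 HQ]]] := H1 Lc S inp p L tf HP.
have [f2 [L2 [E2 HR]]] := H2 Lc S inp p L1 tf HQ.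
by exists (maxn f1 f2).+1, L2; rewrite (runs_seq E1 E2).
Qed.

Lemma hoare_det P Q s g : det s g -> (forall L, P L -> Q (g L)) -> hoare P Q s.
Proof.
move=> H HPQ Lc S inp p L tf HP.
have [f E] := H Lc S inp p (State L tf).
by exists f, (g L); split; [exact: E | exact: HPQ].
Qed.

Definition stepf (n m : nat) := 2 ^ n * m.*2.+1.

Definition VV := 1. Definition TV := 2. Definition UV := 3. Definition PCV := 5.

Definition SCV x n :=
  SAssign x (EBin BMul (ENum (2 ^ n)) (EBin BAdd (EBin BMul (EVar x) (ENum 2)) (ENum 1))).
Definition SVC c :=
  SSeq (POW TV VV) (SAssign VV (EBin BMul (EVar TV) (ENum c.*2.+1))).
Definition SVV :=
  SSeq (POW TV TV) (SAssign VV (EBin BMul (EVar TV)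
      (EBin BAdd (EBin BMul (EVar VV) (ENum 2)) (ENum 1)))).
Definition P1 := POW VV VV.

Lemma det_SCV x n : det (SCV x n) (fun L => upd L x (stepf n (L x))).
Proof. by apply: det_asg => inp p st; rewrite /= /stepf muln2 addn1. Qed.

Lemma det_SVC c : det (SVC c) (fun L v => if v == VV then stepf (L VV) c
                                          else if v == TV then 2 ^ (L VV)
                                          else if v == IV then 0 else L v).
Proof.
apply: det_ext; first by apply: det_seq; [exact: det_POW | exact: (@det_asg _ _ (fun L => L TV * c.*2.+1))].
move=> L v /=; rewrite /upd /stepf.
by [].
Qed.

Lemma det_SVV : det SVV (fun L v => if v == VV then stepf (L TV) (L VV)
                                          else if v == TV then 2 ^ (L TV)
                                          else if v == IV then 0 else L v).
Proof.
apply: det_ext; first by apply: det_seq; [exact: det_POW | exact: (@det_asg _ _ (fun L => L TV * (L VV * 2 + 1)))].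
by move=> L v /=; rewrite /upd /stepf muln2 addn1.
Qed.

Section Prefix.
Variable D : nat.

Definition iv (a : nat) (L : nat -> nat) :=
  [/\ L VV = a, L UV = D & forall v, 5 <= v -> L v = 0].
Definition iv2 (a t : nat) (L : nat -> nat) := iv a L /\ L TV = t.

Lemma h_SCV n a : hoare (iv a) (iv (stepf n a)) (SCV VV n).
Proof.
apply: hoare_det; first exact: det_SCV.
move=> L [h1 h3 h5]; split; rewrite /upd //= ?h1 ?h3 //.
by move=> v hv; case: eqP => [E|]; [move: hv; rewrite E | rewrite h5].
Qed.

Lemma h_SVC c a : hoare (iv a) (iv (stepf a c)) (SVC c).
Proof.
apply: hoare_det; first exact: det_SVC.
move=> L [h1 h3 h5]; split; rewrite //= ?h1 ?h3 //.
by move=> v hv; do 3 (case: eqP => [E|]; first by move: hv; rewrite E); rewrite h5.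
Qed.

Lemma h_P1 a : hoare (iv a) (iv (stepf a 0)) P1.
Proof.
apply: hoare_det; first exact: det_POW.
move=> L [h1 h3 h5]; split; rewrite //= ?h1 ?h3 /stepf ?muln1 //.
by move=> v hv; do 2 (case: eqP => [E|]; first by move: hv; rewrite E); rewrite h5.
Qed.

Lemma h_T0 a : hoare (iv a) (iv2 a (stepf D 0)) (POW TV UV).
Proof.
apply: hoare_det; first exact: det_POW.
move=> L [h1 h3 h5]; split; first split; rewrite //= ?h1 ?h3 /stepf ?muln1 //.
by move=> v hv; do 2 (case: eqP => [E|]; first by move: hv; rewrite E); rewrite h5.
Qed.

Lemma h_TT a t : hoare (iv2 a t) (iv2 a (stepf t 0)) (POW TV TV).
Proof.
apply: hoare_det; first exact: det_POW.
move=> L [[h1 h3 h5] h2]; split; first split; rewrite //= ?h1 ?h2 ?h3 /stepf ?muln1 //.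
by move=> v hv; do 2 (case: eqP => [E|]; first by move: hv; rewrite E); rewrite h5.
Qed.

Lemma h_TC n a t : hoare (iv2 a t) (iv2 a (stepf n t)) (SCV TV n).
Proof.
apply: hoare_det; first exact: det_SCV.
move=> L [[h1 h3 h5] h2]; split; first split; rewrite /upd //= ?h1 ?h2 ?h3 //.
by move=> v hv; case: eqP => [E|]; [move: hv; rewrite E | rewrite h5].
Qed.

Lemma h_SVV a t : hoare (iv2 a t) (iv (stepf t a)) SVV.
Proof.
apply: hoare_det; first exact: det_SVV.
move=> L [[h1 h3 h5] h2]; split; rewrite //= ?h1 ?h2 ?h3 //.
by move=> v hv; do 3 (case: eqP => [E|]; first by move: hv; rewrite E); rewrite h5.
Qed.

End Prefix.

Fixpoint pad (m : nat) : stmt := if m is m'.+1 then SSeq SSkip (pad m') else SSkip.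

Definition Ac (body : stmt) : Defs.comp := Comp [:: 1] [::] [:: FDef 1 1 [::] body].
Definition mainbody := SSeq (SCall 0 0 1 [::]) (SOutput (EVar 0)).
Definition cM : Defs.comp := Comp [:: 0] [:: 1] [:: FDef 0 0 [::] mainbody].
Definition bodyB m := SIf (ENum 0) (pad m) (SReturn (ENum 0)).
Definition Bc (m : nat) : Defs.comp := Comp [:: 1] [::] [:: FDef 1 1 [::] (bodyB m)].
Definition Lcq body m := [:: Ac body; cM; Bc m].
Definition Liq := [:: Iface [:: (0,0,[::])] [::]; Iface [:: (1,0,[::])] [::]].
Definition Rq : seq (seq bool * nat) := [:: ([::], 0)].
Definition SysB := WNode 1 [:: WNode 2 [::]].
Definition SysA := WNode 1 [:: WNode 0 [::]].
Definition inst body m : instance := (0, Rq, Liq, Lcq body m, 1, SysB).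

Fact cst_key : unit. Proof. exact: tt. Qed.
Definition k1 := locked_with cst_key (pickle ((1, 1, [::]) : nat * nat * seq nat)).
Definition k2 := locked_with cst_key (pickle (([:: 1], [::]) : seq nat * seq nat)).
Definition cpost := locked_with cst_key (fun m => CodeSeq.code [:: pickle cM; pickle (Bc m)]).
Definition Zc := locked_with cst_key (pickle ((0, Rq, Liq) : nat * seq (seq bool * nat) * seq iface)).
Definition cc := locked_with cst_key (CodeSeq.code [:: pickle 1]).
Definition cS := locked_with cst_key (CodeSeq.code [:: pickle SysB]).
Definition Kc := locked_with cst_key (pickle SysA).
Lemma KcE : Kc = pickle SysA. Proof. by rewrite /Kc unlock. Qed.
Lemma k1E : k1 = pickle ((1, 1, [::]) : nat * nat * seq nat). Proof. by rewrite /k1 unlock. Qed.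
Lemma k2E : k2 = pickle (([:: 1], [::]) : seq nat * seq nat). Proof. by rewrite /k2 unlock. Qed.
Lemma cpostE m : cpost m = CodeSeq.code [:: pickle cM; pickle (Bc m)]. Proof. by rewrite /cpost unlock. Qed.
Lemma ZcE : Zc = pickle ((0, Rq, Liq) : nat * seq (seq bool * nat) * seq iface). Proof. by rewrite /Zc unlock. Qed.
Lemma ccE : cc = CodeSeq.code [:: pickle 1]. Proof. by rewrite /cc unlock. Qed.
Lemma cSE : cS = CodeSeq.code [:: pickle SysB]. Proof. by rewrite /cS unlock. Qed.

Definition outer m pb :=
  stepf (stepf (stepf Zc (stepf (stepf (stepf k2 (stepf (stepf (stepf k1 (stepf pb 0)) 0) 0)) (cpost m)) 0)) cc) cS.

Definition outer0 m pb :=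
  stepf (stepf (stepf (pickle ((0, Rq, Liq) : nat * seq (seq bool * nat) * seq iface))
   (stepf (stepf (stepf (pickle (([:: 1], [::]) : seq nat * seq nat))
   (stepf (stepf (stepf (pickle ((1, 1, [::]) : nat * nat * seq nat)) (stepf pb 0)) 0) 0))
   (CodeSeq.code [:: pickle cM; pickle (Bc m)])) 0)) (CodeSeq.code [:: pickle 1]))
   (CodeSeq.code [:: pickle SysB]).

Lemma pickle_inst0 body m : pickle (inst body m) = outer0 m (pickle body).
Proof. reflexivity. Qed.

Lemma pickle_inst body m : pickle (inst body m) = outer m (pickle body).
Proof. by rewrite pickle_inst0 /outer k1E k2E cpostE ZcE ccE cSE. Qed.

Definition ee := locked_with cst_key (fun n => pickle (inl n : nat + seq nat)).
Definition ex := locked_with cst_key (pickle (inr [:: UV] : nat + seq nat)).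
Definition eD D := stepf 0 (stepf (stepf (stepf D 0) 0) 0).
Lemma eeE n : ee n = pickle (inl n : nat + seq nat). Proof. by rewrite /ee unlock. Qed.
Lemma exE : ex = pickle (inr [:: UV] : nat + seq nat). Proof. by rewrite /ex unlock. Qed.
Definition inner D :=
  stepf (ee 3) (stepf (ee 2) (stepf ex (stepf (ee 1) (stepf (eD D) (stepf (ee 0) (stepf (ee 0) D)))))).
Definition Dof C := CodeSeq.code (map pickle (GenTree.encode (stmt_enc C) ++ [:: inl 0])).

Lemma code_cat l1 l2 : CodeSeq.code (l1 ++ l2) = foldr stepf (CodeSeq.code l2) l1.
Proof. by rewrite /CodeSeq.code foldr_cat. Qed.

Lemma pickle_inrD D : pickle (inr [:: D] : nat + seq nat) = eD D.
Proof. reflexivity. Qed.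

Lemma pickle_body C : pickle (SSeq (SAssign UV (ENum (Dof C))) C) = inner (Dof C).
Proof.
change (pickle (SSeq (SAssign UV (ENum (Dof C))) C)) with
  (CodeSeq.code (map pickle (GenTree.encode (stmt_enc (SSeq (SAssign UV (ENum (Dof C))) C))))).
have -> : GenTree.encode (stmt_enc (SSeq (SAssign UV (ENum (Dof C))) C)) =
  [:: inl 3; inl 2; inr [:: UV]; inl 1; inr [:: Dof C]; inl 0; inl 0] ++
  (GenTree.encode (stmt_enc C) ++ [:: inl 0]).
  by rewrite /= cats0 -cats1.
rewrite map_cat code_cat -/(Dof C).
rewrite /inner -pickle_inrD !eeE exE.
reflexivity.
Qed.

Definition regv r := r + 10.

Definition instr_code (i : nat) (ins : rm_instr) : stmt :=
  match ins with
  | RInc r => SSeq (SAssign (regv r) (EBin BAdd (EVar (regv r)) (ENum 1)))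
                   (SAssign PCV (ENum i.+1))
  | RDecJz r l => SIf (EBin BEq (EVar (regv r)) (ENum 0)) (SAssign PCV (ENum l))
                   (SSeq (SAssign (regv r) (EBin BSub (EVar (regv r)) (ENum 1)))
                         (SAssign PCV (ENum i.+1)))
  end.

Fixpoint dispatch (i : nat) (Q : seq rm_instr) : stmt :=
  match Q with
  | [::] => SSkip
  | ins :: Q' => SIf (EBin BEq (EVar PCV) (ENum i)) (instr_code i ins) (dispatch i.+1 Q')
  end.

Definition sim (P : seq rm_instr) :=
  SWhile (EBin BLt (EVar PCV) (ENum (size P))) (dispatch 0 P).

Definition corr (cf : nat * (nat -> nat)) (L : nat -> nat) :=
  L PCV = cf.1 /\ forall r, L (regv r) = cf.2 r.

Definition stepi (ins : rm_instr) (cf : nat * (nat -> nat)) :=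
  let: (pc, regs) := cf in
  match ins with
  | RInc r => (pc.+1, upd regs r (regs r).+1)
  | RDecJz r l => if regs r == 0 then (l, regs)
                  else (pc.+1, upd regs r (regs r).-1)
  end.

Lemma rm_step_stepi P cf : rm_step P cf = stepi (nth (RInc 0) P cf.1) cf.
Proof. by case: cf. Qed.

Lemma regv_PCV r : (regv r == PCV) = false.
Proof. by rewrite /regv /PCV addnC. Qed.
Lemma PCV_regv r : (PCV == regv r) = false.
Proof. by rewrite eq_sym regv_PCV. Qed.
Lemma regv_eq r r' : (regv r' == regv r) = (r' == r).
Proof. by rewrite /regv eqn_add2r. Qed.

Section Sim.
Variables (Lc : seq Defs.comp) (S : wtree) (inp : seq bool) (p : seq nat) (tf : seq nat -> nat -> nat).

Lemma instr_ok ins pc regs L : corr (pc, regs) L -> exists f L',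
  exec Lc S inp f p (State L tf) (instr_code pc ins) = ONormal (State L' tf) /\
  corr (stepi ins (pc, regs)) L'.
Proof.
move=> [hpc hr]; case: ins => [r|r l] /=.
- exists 2, (upd (upd L (regv r) (L (regv r) + 1)) PCV pc.+1); split => //.
  split => /=; first by rewrite /upd eqxx.
  move=> r'; rewrite /upd regv_PCV regv_eq; case: (r' == r); by rewrite ?hr ?addn1.
- case: (eqVneq (regs r) 0) => [h0|hn0].
  + exists 2, (upd L PCV l); split; first by rewrite /= hr /= h0.
    split; first by rewrite /upd eqxx.
    by move=> r'; rewrite /upd regv_PCV hr.
  + exists 3, (upd (upd L (regv r) (L (regv r) - 1)) PCV pc.+1); split.
      by rewrite /= hr /= (negbTE hn0).
    split => /=; first by rewrite /upd eqxx.
    move=> r'; rewrite /upd regv_PCV regv_eq; case: (r' == r); by rewrite ?hr ?subn1.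
Qed.

Lemma dispatch_ok Q i pc regs L : i <= pc < i + size Q -> corr (pc, regs) L ->
  exists f L', exec Lc S inp f p (State L tf) (dispatch i Q) = ONormal (State L' tf) /\
  corr (stepi (nth (RInc 0) Q (pc - i)) (pc, regs)) L'.
Proof.
elim: Q i => [|ins Q IH] i /=; first by rewrite addn0 => /andP[/leq_ltn_trans h /h]; rewrite ltnn.
move=> /andP[hi hpc] hc.
case: (eqVneq pc i) hc => [->|hne] hc.
  have [f [L' [E hc']]] := instr_ok ins hc.
  by exists f.+1, L'; rewrite /= hc.1 /= eqxx subnn E.
have hi' : i.+1 <= pc by rewrite ltn_neqAle eq_sym hne hi.
have [f [L' [E hc']]] := IH i.+1 ltac:(by rewrite hi' addSn -addnS) hc.
exists f.+1, L'; rewrite /= hc.1 /= (negbTE hne) /= E; split => //.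
by rewrite -(subnSK hi') /=.
Qed.

Lemma sim_ok P fuel pc regs L regs' :
  rm_run P fuel (pc, regs) = Some regs' -> corr (pc, regs) L ->
  exists f L', exec Lc S inp f p (State L tf) (sim P) = ONormal (State L' tf) /\
  forall r, L' (regv r) = regs' r.
Proof.
elim: fuel pc regs L => [|fuel IH] pc regs L /=.
  case: ifP => // hs [<-] hc; exists 1, L; split; last exact: hc.2.
  by rewrite /= hc.1 ltnNge hs.
case: ifP => [hs [<-] hc|hs].
  exists 1, L; split; last exact: hc.2.
  by rewrite /= hc.1 ltnNge hs.
move=> hrun hc.
change (rm_run P fuel (stepi (nth (RInc 0) P pc) (pc, regs)) = Some regs') in hrun.
have hlt : pc < size P by rewrite ltnNge hs.
have [f1 [L1 [E1 hc1]]] := @dispatch_ok P 0 pc regs L ltac:(by rewrite hlt) hc.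
rewrite subn0 in hc1.
move: hrun hc1; case: (stepi _ _) => pc1 regs1 hrun hc1.
have [f2 [L2 [E2 h2]]] := IH pc1 regs1 L1 hrun hc1.
exists (maxn f1 f2).+1, L2; split => //.
apply: (runs_while (st1 := State L1 tf)) => //.
by rewrite /= hc.1 hlt.
Qed.

End Sim.

Definition core m :=
  SSeq (SCV VV (ee 0)) (SSeq (SCV VV (ee 0)) (SSeq (POW TV UV) (SSeq (POW TV TV)
  (SSeq (POW TV TV) (SSeq (SCV TV 0) (SSeq SVV (SSeq (SCV VV (ee 1))
  (SSeq (SCV VV ex) (SSeq (SCV VV (ee 2)) (SSeq (SCV VV (ee 3)) (SSeq P1
  (SSeq (SCV VV k1) (SSeq P1 (SSeq P1 (SSeq (SCV VV k2) (SSeq (SVC (cpost m))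
  (SSeq P1 (SSeq (SCV VV Zc) (SSeq (SVC cc) (SVC cS)))))))))))))))))))).

Lemma h_core D m : hoare (iv D D) (iv D (outer m (inner D))) (core m).
Proof.
eapply hoare_seq; first exact: h_SCV.
eapply hoare_seq; first exact: h_SCV.
eapply hoare_seq; first exact: h_T0.
eapply hoare_seq; first exact: h_TT.
eapply hoare_seq; first exact: h_TT.
eapply hoare_seq; first exact: h_TC.
eapply hoare_seq; first exact: h_SVV.
eapply hoare_seq; first exact: h_SCV.
eapply hoare_seq; first exact: h_SCV.
eapply hoare_seq; first exact: h_SCV.
eapply hoare_seq; first exact: h_SCV.
eapply hoare_seq; first exact: h_P1.
eapply hoare_seq; first exact: h_SCV.
eapply hoare_seq; first exact: h_P1.
eapply hoare_seq; first exact: h_P1.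
eapply hoare_seq; first exact: h_SCV.
eapply hoare_seq; first exact: h_SVC.
eapply hoare_seq; first exact: h_P1.
eapply hoare_seq; first exact: h_SCV.
eapply hoare_seq; first exact: h_SVC.
exact: h_SVC.
Qed.

Definition Cmain P m :=
  SSeq (SAssign VV (EVar UV)) (SSeq (core m) (SSeq (SAssign (regv 0) (EVar VV))
    (SSeq (SAssign PCV (ENum 0)) (sim P)))).
Definition final := SIf (EBin BEq (EVar (regv 0)) (ENum Kc)) (SReturn (ENum 1)) (SReturn (ENum 0)).
Definition Cst P m := SSeq (Cmain P m) final.
Definition mP P := stmt_loc (Cst P 0).
Definition Cfin P := Cst P (mP P).
Definition bodyA P := SSeq (SAssign UV (ENum (Dof (Cfin P)))) (Cfin P).
Definition theinst P := inst (bodyA P) (mP P).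

Lemma loc_Cst P m : stmt_loc (Cst P m) = mP P.
Proof. reflexivity. Qed.

Lemma pickle_theinst P :
  pickle (theinst P) = outer (mP P) (inner (Dof (Cfin P))).
Proof. by rewrite /theinst pickle_inst /bodyA pickle_body. Qed.

Lemma h_sim P fuel cf regs : rm_run P fuel cf = Some regs ->
  hoare (corr cf) (fun L => forall r, L (regv r) = regs r) (sim P).
Proof.
case: cf => pc regs0 hr Lc S inp p L tf hc.
have [f [L' [E h]]] := sim_ok Lc S inp p tf hr hc.
by exists f, L'.
Qed.

Lemma h_Cmain P fuel regs x : x = outer (mP P) (inner (Dof (Cfin P))) ->
  rm_run P fuel (0, upd (fun _ => 0) 0 x) = Some regs ->
  hoare (fun L => L UV = Dof (Cfin P) /\ forall v, v != UV -> L v = 0)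
        (fun L => forall r, L (regv r) = regs r) (Cmain P (mP P)).
Proof.
move=> hx hr; move: (Dof (Cfin P)) hx => D hx.
apply: hoare_seq.
  apply: (hoare_det (Q := iv D D)); first exact: (@det_asg _ _ (fun L => L UV)).
  move=> L [h3 h0]; split; rewrite /upd //= h3 //.
  move=> v hv; have hV : v != VV by apply/eqP => E; rewrite E in hv.
  have hU : v != UV by apply/eqP => E; rewrite E in hv.
  by rewrite (negbTE hV); apply: h0.
apply: hoare_seq; first exact: h_core.
apply: (hoare_seq (Q := fun L => L (regv 0) = x /\ forall v, 5 <= v -> v != regv 0 -> L v = 0)).
  apply: hoare_det; first exact: (@det_asg _ _ (fun L => L VV)).
  move=> L [h1 h3 h5]; split; first by rewrite /upd eqxx h1 hx.
  by move=> v hv hn; rewrite /upd (negbTE hn) h5.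
apply: hoare_seq; last exact: h_sim hr.
apply: hoare_det; first exact: (@det_asg _ _ (fun L => 0)).
move=> L [h10 h5]; split; first by rewrite /upd eqxx.
move=> r /=; rewrite /upd regv_PCV.
case: (eqVneq r 0) => [->|hr0]; first by rewrite h10.
apply: h5; first by rewrite /regv; apply: leq_trans (leq_addl r 10).
by rewrite regv_eq.
Qed.

Lemma exec_call Lc S inp f p st x k g args d r tf' :
  lookup_callee Lc S p k g = Some d -> size args = size (d_params d) ->
  exec Lc S inp f (rcons p k)
    (State (bind_params (d_params d) (map (st_locals st) args)) (st_tfs st)) (d_body d)
    = OReturn r tf' ->
  exec Lc S inp f.+1 p st (SCall x k g args) = ONormal (State (upd (st_locals st) x r) tf').
Proof. by move=> /= -> -> E; rewrite eqxx /= E. Qed.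

Section Sys.
Variables (body : stmt) (m : nat).

Lemma sysA_out r :
  (forall Lc S inp p L tf, (forall v, L v = 0) ->
     exists f, exec Lc S inp f p (State L tf) body = OReturn r tf) ->
  sys_outputs (Lcq body m) SysA [::] r /\
  forall o, sys_outputs (Lcq body m) SysA [::] o -> o = r.
Proof.
move=> Hb.
have [f Ef] := Hb (Lcq body m) SysA [::] [:: 0] (bind_params [::] [::]) (fun _ _ => 0)
  (fun v => erefl).
have E : exec (Lcq body m) SysA [::] (maxn f.+1 1).+1 [::]
   (State (fun _ => 0) (fun _ _ => 0)) mainbody = OHalt r.
  apply: (runs_seq (st1 := State (upd (fun _ => 0) 0 r) (fun _ _ => 0))) => //.
  exact: (@exec_call _ _ _ _ _ _ _ _ _ _ (FDef 1 1 [::] body)).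
split; first by exists (maxn f.+1 1).+1.
move=> o [f' E'].
have H : OHalt o = OHalt r by apply: (@exec_det _ _ _ _ _ _ _ _ _ _ E' E).
by case: H.
Qed.

Lemma sysB_out : sys_outputs (Lcq body m) SysB [::] 0.
Proof.
exists 4.
apply: (runs_seq (f1 := 3) (f2 := 1) (st1 := State (upd (fun _ => 0) 0 0) (fun _ _ => 0))) => //.
Qed.

End Sys.

Section Valid.
Variables (body : stmt) (m : nat).

Lemma valid_cases S' : valid_system (Lcq body m) 1 S' -> S' = SysA \/ S' = SysB.
Proof.
case: S' => a ch; rewrite /valid_system /=.
case/andP=> /eqP ha; subst a.
case: ch => [|[b ch'] [|t2 ch]] //=; rewrite ?andbF //.
case: b => [|[|[|b]]] //=; case: ch' => [|t ch'] //=.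
all: try (move=> _; first [by left | by right]).
all: by rewrite andbF.
Qed.

Lemma valid_A : valid_system (Lcq body m) 1 SysA. Proof. by []. Qed.
Lemma valid_B : valid_system (Lcq body m) 1 SysB. Proof. by []. Qed.

Lemma rew_lt : stmt_loc body < stmt_loc (bodyB m) ->
  Rew_CodeB Liq (Lcq body m) SysA < Rew_CodeB Liq (Lcq body m) SysB.
Proof.
move=> h; rewrite /Rew_CodeB /= /comp_loc_red /= /fdef_loc /=.
move: h; rewrite /bodyB /=.
move: (comp_loc cM) (iface_loc _) (iface_loc _) (stmt_loc body) (stmt_loc (pad m)) => a b c d e; lia.
Qed.

Lemma lib_ok : lib_wf Liq (Lcq body m). Proof. by []. Qed.
End Valid.

Lemma bodyA_run P fuel regs :
  rm_run P fuel (0, upd (fun _ => 0) 0 (pickle (theinst P))) = Some regs ->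
  forall Lc S inp p L tf, (forall v, L v = 0) ->
  exists f, exec Lc S inp f p (State L tf) (bodyA P) =
            OReturn (if regs 0 == Kc then 1 else 0) tf.
Proof.
move=> hr Lc S inp p L tf hL.
have hC := h_Cmain (pickle_theinst P) hr.
have hpre : upd L UV (Dof (Cfin P)) UV = Dof (Cfin P) /\
    forall v, v != UV -> upd L UV (Dof (Cfin P)) v = 0.
  by split; [rewrite /upd eqxx | move=> v hv; rewrite /upd (negbTE hv) hL].
have [f1 [L1 [E1 h1]]] := hC Lc S inp p (upd L UV (Dof (Cfin P))) tf hpre.
have E2 : exec Lc S inp 2 p (State L1 tf) final = OReturn (if regs 0 == Kc then 1 else 0) tf.
  by rewrite /= h1; case: (regs 0 == Kc).
exists (maxn 1 (maxn f1 2).+1).+1.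
rewrite /bodyA /Cfin /Cst.
apply: (runs_seq (st1 := State (upd L UV (Dof (Cfin P))) tf)) => //.
exact: (runs_seq E1 E2).
Qed.

Lemma loc_lt P : stmt_loc (bodyA P) < stmt_loc (bodyB (mP P)).
Proof.
have hp : forall m, stmt_loc (pad m) = m.+1 by elim=> //= m ->; rewrite add1n.
have -> : stmt_loc (bodyA P) = 1 + stmt_loc (Cfin P) by [].
rewrite /Cfin loc_Cst; move: (mP P) => m; rewrite /bodyB /= hp; lia.
Qed.

Theorem mainTheorem16 :
  forall Env : env, ~ exists P : seq rm_instr, solves_ESAdapt_CodeB Env P.
Proof.
move=> Env [P HP].
have Hw : working (Lcq (bodyA P) (mP P)) Rq SysB.
  by move=> io; rewrite inE => /eqP ->; exact: sysB_out.
have [S' [[vS' wS' optS'] [fuel [regs [hrun hreg]]]]] :=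
  HP 0 Rq Liq (Lcq (bodyA P) (mP P)) 1 SysB
    (And5 (lib_ok _ _) erefl erefl (valid_B _ _) Hw).
change (rm_run P fuel (0, upd (fun _ => 0) 0 (pickle (theinst P))) = Some regs) in hrun.
have [hA1 hA2] := sysA_out (mP P) (bodyA_run hrun).
rewrite hreg KcE in hA1 hA2.
case: (eqVneq S' SysA) => [eS|nS].
  have := wS' ([::], 0) (mem_head _ _); rewrite eS /= => /hA2.
  by rewrite eS eqxx.
have hneq : (pickle S' == pickle SysA) = false.
  by apply/negbTE; apply: contra nS => /eqP /(pcan_inj pickleK) ->.
rewrite hneq in hA1.
have wA : working (Lcq (bodyA P) (mP P)) Rq SysA.
  by move=> io; rewrite inE => /eqP ->.
have := optS' SysA (valid_A _ _) wA.
case: (valid_cases vS') => eS; first by rewrite eS eqxx in nS.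
rewrite eS leqNgt; move/negP; apply.
exact: rew_lt (loc_lt P).
Qed.
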